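(* Let $P$ be a finite poset and $t\geq 2$, $n\geq 1$ integers. Suppose $\mathcal{F}\subseteq[t]^n$ is induced $P$-saturated and $i\in[n]$ is such that (a) $i$ is not separating for $\mathcal{F}$, and (b) $f(i)\in\{1,t\}$ for all $f\in\mathcal{F}$. Then $L_i(\mathcal{F})=\{L_i(f):f\in\mathcal{F}\}$ is an induced $P$-saturated family in $[t]^{n+1}$.
   Context: $[n]=\{1,\dots,n\}$; $[t]^n$ is the set of functions $f:[n]\to[t]$ ordered by $f\leq g$ iff $f(j)\leq g(j)$ for all $j$. An induced copy of $P$ in $\mathcal{F}\subseteq[t]^n$ is an injective map $\phi:P\to\mathcal{F}$ with $\phi(x)\leq\phi(y)$ iff $x\leq_P y$. $\mathcal{F}$ is induced $P$-saturated if it contains no induced copy of $P$ and for every $f\in[t]^n\setminus\mathcal{F}$, $\mathcal{F}\cup\{f\}$ contains an induced copy of $P$. For $f\in[t]^n$ and $i\in[n]$: $L_i(f)\in[t]^{n+1}$ is given by $L_i(f)(x)=f(x)$ for $x\in[n]$ and $L_i(f)(n+1)=f(i)$; $D_i(f)\in[t]^{n-1}$ is given by $D_i(f)(x)=f(x)$ for $x<i$ and $D_i(f)(x)=f(x+1)$ for $i\leq x\leq n-1$. Coordinate $i$ is separating for $\mathcal{F}$ if there exist distinct $f,f'\in\mathcal{F}$ with $D_i(f)\leq D_i(f')$ and $f(i)>f'(i)$. *)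

(* Defs.v *)
From mathcomp Require Import all_boot all_order.
Set Implicit Arguments. Unset Strict Implicit. Unset Printing Implicit Defensive.
Import Order.Theory.

(* [t]^n is modelled by {ffun 'I_n -> 'I_t}: coordinates 0..n-1, values 0..t-1
   (the shift by one preserves the order). *)
Notation grid n t := {ffun 'I_n -> 'I_t}.

Definition leF (n t : nat) (f g : grid n t) : bool :=
  [forall j, (nat_of_ord (f j) <= nat_of_ord (g j))%N].

Definition has_induced_copy (d : Order.disp_t) (P : finPOrderType d)
  (n t : nat) (F : {set grid n t}) : Prop :=
  exists phi : P -> grid n t,
    [/\ injective phi, (forall x, phi x \in F) &
        (forall x y, leF (phi x) (phi y) = (x <= y)%O)].

Definition induced_saturated (d : Order.disp_t) (P : finPOrderType d)
  (n t : nat) (F : {set grid n t}) : Prop :=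
  ~ has_induced_copy P F /\
  (forall f : grid n t, f \notin F -> has_induced_copy P (f |: F)).

Definition Lext (n t : nat) (i : 'I_n) (f : grid n t) : grid n.+1 t :=
  [ffun x : 'I_n.+1 => match unlift ord_max x with
                       | Some y => f y
                       | None => f i end].

Definition Ddel (n t : nat) (i : 'I_n) (f : grid n t) : grid n.-1 t :=
  [ffun x : 'I_n.-1 => f (lift i x)].

Definition separating (n t : nat) (i : 'I_n) (F : {set grid n t}) : Prop :=
  exists f f', [/\ f \in F, f' \in F, f != f',
                   leF (Ddel i f) (Ddel i f') &
                   (nat_of_ord (f' i) < nat_of_ord (f i))%N].

(* Main.v *)
Require Import Defs.
From mathcomp Require Import all_boot all_order.
From mathcomp Require Import zify.
Set Implicit Arguments. Unset Strict Implicit.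

Section Aux.
Variables (n t : nat) (i : 'I_n).

Definition Dlast (g : grid n.+1 t) : grid n t := [ffun j => g (lift ord_max j)].

Lemma Lext_lift (f : grid n t) y : Lext i f (lift ord_max y) = f y.
Proof. by rewrite ffunE liftK. Qed.

Lemma Lext_max (f : grid n t) : Lext i f ord_max = f i.
Proof. by rewrite ffunE unlift_none. Qed.

Lemma DlastK f : Dlast (Lext i f) = f.
Proof. by apply/ffunP => y; rewrite ffunE Lext_lift. Qed.

Lemma Lext_inj : injective (@Lext n t i).
Proof. by move=> f g H; rewrite -(DlastK f) -(DlastK g) H. Qed.

Lemma leF_refl (f : grid n t) : @leF n t f f.
Proof. by apply/forallP => j. Qed.

Lemma leF_L (f f' : grid n t) : leF (Lext i f) (Lext i f') = leF f f'.
Proof.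
apply/forallP/forallP => H j.
  by have := H (lift ord_max j); rewrite !Lext_lift.
by case: (unliftP ord_max j) => [y ->|->]; rewrite ?Lext_lift ?Lext_max.
Qed.

Variable g : grid n.+1 t.
Let gn := Dlast g.
Definition lo (f : grid n t) := [forall j, (j != i) ==> (nat_of_ord (f j) <= gn j)].
Definition hi (f : grid n t) := [forall j, (j != i) ==> (nat_of_ord (gn j) <= f j)].

Lemma leLg (f : grid n t) : leF (Lext i f) g =
  [&& lo f, nat_of_ord (f i) <= g (lift ord_max i) & nat_of_ord (f i) <= g ord_max].
Proof.
apply/idP/idP.
  move/forallP => H; apply/and3P; split.
  - apply/forallP => j; apply/implyP => _.
    by have := H (lift ord_max j); rewrite Lext_lift ffunE.
  - by have := H (lift ord_max i); rewrite Lext_lift.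
  - by have := H ord_max; rewrite Lext_max.
case/and3P => /forallP Hl Ha Hb; apply/forallP => x.
case: (unliftP ord_max x) => [y ->|->]; rewrite ?Lext_lift ?Lext_max //.
case: (eqVneq y i) => [->//|ne].
by have := Hl y; rewrite ne /= ffunE.
Qed.

Lemma legL (f : grid n t) : leF g (Lext i f) =
  [&& hi f, nat_of_ord (g (lift ord_max i)) <= f i & nat_of_ord (g ord_max) <= f i].
Proof.
apply/idP/idP.
  move/forallP => H; apply/and3P; split.
  - apply/forallP => j; apply/implyP => _.
    by have := H (lift ord_max j); rewrite Lext_lift ffunE.
  - by have := H (lift ord_max i); rewrite Lext_lift.
  - by have := H ord_max; rewrite Lext_max.
case/and3P => /forallP Hl Ha Hb; apply/forallP => x.
case: (unliftP ord_max x) => [y ->|->]; rewrite ?Lext_lift ?Lext_max //.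
case: (eqVneq y i) => [->//|ne].
by have := Hl y; rewrite ne /= ffunE.
Qed.

Definition mke (c : 'I_t) : grid n t := [ffun j => if j == i then c else gn j].

Lemma lefe (f : grid n t) (c : 'I_t) : leF f (mke c) = lo f && (nat_of_ord (f i) <= c).
Proof.
apply/idP/idP.
  move/forallP => H; apply/andP; split.
  - apply/forallP => j; apply/implyP => ne.
    by have := H j; rewrite ffunE (negbTE ne).
  - by have := H i; rewrite ffunE eqxx.
case/andP => /forallP Hl Hc; apply/forallP => j; rewrite ffunE.
case: (eqVneq j i) => [->//|ne].
by have := Hl j; rewrite ne.
Qed.

Lemma leef (f : grid n t) (c : 'I_t) : leF (mke c) f = hi f && (nat_of_ord c <= f i).
Proof.
apply/idP/idP.
  move/forallP => H; apply/andP; split.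
  - apply/forallP => j; apply/implyP => ne.
    by have := H j; rewrite ffunE (negbTE ne).
  - by have := H i; rewrite ffunE eqxx.
case/andP => /forallP Hl Hc; apply/forallP => j; rewrite ffunE.
case: (eqVneq j i) => [->//|ne].
by have := Hl j; rewrite ne.
Qed.

Lemma lo_mke c : lo (mke c).
Proof. by apply/forallP => j; apply/implyP => ne; rewrite !ffunE (negbTE ne). Qed.
Lemma hi_mke c : hi (mke c).
Proof. by apply/forallP => j; apply/implyP => ne; rewrite !ffunE (negbTE ne). Qed.

End Aux.

Lemma transfer (d : Order.disp_t) (P : finPOrderType d) (n t : nat) (i : 'I_n)
  (F : {set grid n t}) (g : grid n.+1 t) (e : grid n t) :
  g \notin [set Lext i f | f in F] ->
  (forall f, f \in F -> leF f e = leF (Lext i f) g /\ leF e f = leF g (Lext i f)) ->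
  has_induced_copy P (e |: F) -> has_induced_copy P (g |: [set Lext i f | f in F]).
Proof.
move=> gnot He [phi [inj inF ord]].
pose psi x := if phi x == e then g else Lext i (phi x).
have inFx x : phi x != e -> phi x \in F.
  by move=> ne; have := inF x; rewrite in_setU1 (negbTE ne).
exists psi; split.
- move=> x y; rewrite /psi.
  case: (eqVneq (phi x) e) => ex; case: (eqVneq (phi y) e) => ey.
  + by move=> _; apply: inj; rewrite ex ey.
  + move=> E; case/negP: gnot; rewrite E; apply/imsetP; exists (phi y) => //.
    exact: inFx.
  + move=> E; case/negP: gnot; rewrite -E; apply/imsetP; exists (phi x) => //.
    exact: inFx.
  + by move/Lext_inj; apply: inj.
- move=> x; rewrite /psi; case: (eqVneq (phi x) e) => ex; rewrite in_setU1 ?eqxx //.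
  by apply/orP; right; apply/imsetP; exists (phi x) => //; exact: inFx.
- move=> x y; rewrite -ord /psi.
  case: (eqVneq (phi x) e) => ex; case: (eqVneq (phi y) e) => ey.
  + by rewrite ex ey !leF_refl.
  + by rewrite ex; case: (He _ (inFx _ ey)).
  + by rewrite ey; case: (He _ (inFx _ ex)).
  + by rewrite leF_L.
Qed.

Theorem mainTheorem11 (d : Order.disp_t) (P : finPOrderType d) (t n : nat)
  (F : {set {ffun 'I_n -> 'I_t}}) (i : 'I_n) :
  (2 <= t)%N -> (1 <= n)%N ->
  induced_saturated P F ->
  ~ separating i F ->
  (forall f, f \in F -> nat_of_ord (f i) = 0%N \/ nat_of_ord (f i) = t.-1) ->
  induced_saturated P [set Lext i f | f in F].
Proof.
move=> t2 n1 [nocopy sat] nsep vals; split.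
  case=> phi [inj inF ord]; apply: nocopy.
  exists (fun x => Dlast (phi x)); split.
  - move=> x y E; apply: inj.
    have [fx _ ex] := imsetP (inF x); have [fy _ ey] := imsetP (inF y).
    by move: E; rewrite ex ey !DlastK => ->.
  - by move=> x; have [f fF ->] := imsetP (inF x); rewrite DlastK.
  - move=> x y; rewrite -ord.
    have [fx _ ->] := imsetP (inF x); have [fy _ ->] := imsetP (inF y).
    by rewrite !DlastK leF_L.
move=> g gnot.
pose a : nat := g (lift ord_max i); pose b : nat := g ord_max.
have key : forall c : 'I_t, mke i g c \notin F ->
   (forall f, f \in F -> (lo i g f && (nat_of_ord (f i) <= c) =
        [&& lo i g f, nat_of_ord (f i) <= a & nat_of_ord (f i) <= b]) /\
      (hi i g f && (nat_of_ord c <= f i) =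
        [&& hi i g f, a <= f i & b <= f i])) ->
   has_induced_copy P (g |: [set Lext i f | f in F]).
  move=> c enot H; apply: (transfer (e := mke i g c)) => //; last exact: sat.
  by move=> f fF; rewrite lefe leef leLg legL; case: (H f fF).
case: (eqVneq a b) => ab.
  apply: (key (g (lift ord_max i))).
    apply/negP => eF; case/negP: gnot; apply/imsetP; exists (mke i g (g (lift ord_max i))) => //.
    apply/ffunP => x; case: (unliftP ord_max x) => [y ->|->].
      rewrite Lext_lift ffunE; case: (eqVneq y i) => [->//|_].
      by rewrite ffunE.
    rewrite Lext_max ffunE eqxx; apply: val_inj. exact: (esym ab).
  move=> f _; rewrite /a /b in ab *; rewrite -ab !andbb; split; by rewrite -?andbA ?andbb.
have ha : a < t by exact: ltn_ord.
have hb : b < t by exact: ltn_ord.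
case: (ltnP 2 t) => t3.
  have h1 : 1 < t by lia.
  apply: (key (Ordinal h1)).
    apply/negP => eF; have := vals _ eF; rewrite ffunE eqxx /=; lia.
  move=> f fF; have hv := vals f fF; have hl := ltn_ord (f i).
  move: (nat_of_ord (f i)) hv hl => x hv hl; clearbody a b.
  by split; congr andb => /=; lia.
have sep : forall f1 f2, f1 \in F -> f2 \in F -> hi i g f1 -> nat_of_ord (f1 i) = 0 ->
   lo i g f2 -> nat_of_ord (f2 i) = 1 -> False.
  move=> f1 f2 f1F f2F /forallP h1 e1 /forallP h2 e2; apply: nsep.
  exists f2, f1; split => //.
  - by apply/negP => /eqP E; move: e1; rewrite -E e2.
  - apply/forallP => x; rewrite !ffunE.
    have ne : lift i x != i by rewrite eq_sym neq_lift.
    have := h1 (lift i x); have := h2 (lift i x); rewrite ne /=; lia.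
  - lia.
have h0 : 0 < t by lia.
have h1 : 1 < t by lia.
case: (boolP [exists f in F, hi i g f && (nat_of_ord (f i) == 0)]) => ex.
  case/existsP: ex => f1 /and3P [f1F hf1 /eqP e1].
  apply: (key (Ordinal h1)).
    apply/negP => eF; apply: (sep f1 (mke i g (Ordinal h1))) => //.
      exact: lo_mke.
    by rewrite ffunE eqxx.
  move=> f fF; have hv := vals f fF; have hl := ltn_ord (f i).
  have nf : lo i g f -> nat_of_ord (f i) != 1.
    by move=> lf; apply/eqP => fi1; exact: (sep f1 f).
  move: (nat_of_ord (f i)) hv hl nf => x hv hl nf; clearbody a b.
  split; first by case: (lo i g f) nf => /= [nf|_]; [have := nf isT; lia | by []].
  by case: (hi i g f) => //=; lia.
apply: (key (Ordinal h0)).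
  apply/negP => eF; case/negP: ex; apply/existsP; exists (mke i g (Ordinal h0)).
  by rewrite eF hi_mke ffunE eqxx.
move=> f fF; have hv := vals f fF; have hl := ltn_ord (f i).
have nf : hi i g f -> nat_of_ord (f i) != 0.
  move=> hf; apply/eqP => fi0; case/negP: ex; apply/existsP; exists f.
  by rewrite fF hf fi0.
move: (nat_of_ord (f i)) hv hl nf => x hv hl nf; clearbody a b.
split; first by case: (lo i g f) => //=; lia.
by case: (hi i g f) nf => /= [nf|_]; [have := nf isT; lia | by []].
Qed.
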